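(* Let $\lambda\in\mathbb{R}\setminus\{0\}$, $k\in\mathbb{Z}$, $u\in\mathbb{C}$ with $u\neq1$, and $x_1,x_2,y\in\mathbb{R}$. Then for every integer $n\ge0$, \[ FG_{n,\lambda}^{[k,c]}(x_1+x_2,y;u)=\sum_{m=0}^{n}\binom{n}{m}\sum_{r=0}^{m}S_{2,\lambda}^{(x_1)}(m,r)\,(x_2)_r\,FG_{n-m,\lambda}^{[k,c]}(0,y;u) \] and \[ FG_{n,\lambda}^{[k,s]}(x_1+x_2,y;u)=\sum_{m=0}^{n}\binom{n}{m}\sum_{r=0}^{m}S_{2,\lambda}^{(x_1)}(m,r)\,(x_2)_r\,FG_{n-m,\lambda}^{[k,s]}(0,y;u). \]
   Context: All generating functions are formal power series in $t$. For $z\in\mathbb{C}$: $(z)_{0,\lambda}=1$ and $(z)_{n,\lambda}=z(z-\lambda)\cdots(z-(n-1)\lambda)$ for $n\ge1$; $(z)_0=1$ and $(z)_r=z(z-1)\cdots(z-r+1)$ is the ordinary falling factorial. The degenerate exponential is $e_\lambda^{z}(t)=\sum_{n\ge0}(z)_{n,\lambda}\frac{t^n}{n!}$ (i.e. $(1+\lambda t)^{z/\lambda}$), and $e_\lambda(t)=e_\lambda^{1}(t)$. Also $\log_\lambda(1+t)=\frac{1}{\lambda}\big((1+t)^\lambda-1\big)$. The degenerate $\lambda$-Stirling polynomials of the second kind are defined by $\frac{(e_\lambda(t)-1)^r}{r!}e_\lambda^{x}(t)=\sum_{n\ge r}S_{2,\lambda}^{(x)}(n,r)\frac{t^n}{n!}$.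 The modified degenerate polyexponential function is $\mathrm{Ei}_{k,\lambda}(x)=\sum_{n\ge1}\frac{(1)_{n,\lambda}}{n^k(n-1)!}x^n$. The degenerate cosine and sine are $\cos_\lambda^{(y)}(t)=\frac{e_\lambda^{iy}(t)+e_\lambda^{-iy}(t)}{2}$ and $\sin_\lambda^{(y)}(t)=\frac{e_\lambda^{iy}(t)-e_\lambda^{-iy}(t)}{2i}$. The cosine and sine degenerate poly-Frobenius-Genocchi polynomials are defined by $\sum_{n\ge0}FG_{n,\lambda}^{[k,c]}(x,y;u)\frac{t^n}{n!}=\frac{(1-u)\mathrm{Ei}_{k,\lambda}(\log_\lambda(1+t))}{e_\lambda(t)-u}e_\lambda^{x}(t)\cos_\lambda^{(y)}(t)$ and $\sum_{n\ge0}FG_{n,\lambda}^{[k,s]}(x,y;u)\frac{t^n}{n!}=\frac{(1-u)\mathrm{Ei}_{k,\lambda}(\log_\lambda(1+t))}{e_\lambda(t)-u}e_\lambda^{x}(t)\sin_\lambda^{(y)}(t)$. *)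

(* Defs.v *)
From HB Require Import structures.
From mathcomp Require Import all_boot all_order all_algebra.
From mathcomp Require Import reals.
From mathcomp Require Import complex.
Set Implicit Arguments. Unset Strict Implicit. Unset Printing Implicit Defensive.
Import Order.TTheory GRing.Theory Num.Theory.
Local Open Scope ring_scope.

Section FPS.
Variable F : fieldType.

(* a formal power series sum_n a n t^n is represented by a : nat -> F *)
Definition sone : nat -> F := fun n => (n == 0%N)%:R.
Definition sadd (a b : nat -> F) : nat -> F := fun n => a n + b n.
Definition ssub (a b : nat -> F) : nat -> F := fun n => a n - b n.
Definition sscale (c : F) (a : nat -> F) : nat -> F := fun n => c * a n.
Definition smul (a b : nat -> F) : nat -> F :=
  fun n => \sum_(i < n.+1) a i * b (n - i)%N.
Definition spow (a : nat -> F) (r : nat) : nat -> F := iter r (smul a) sone.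
(* composition f(g(t)), meaningful when g 0 = 0 (then finite sums suffice) *)
Definition scomp (f g : nat -> F) : nat -> F :=
  fun n => \sum_(m < n.+1) f m * spow g m n.
(* multiplicative inverse of a series with a 0 != 0:
   1/(a0 + h) = sum_m (-1)^m h^m / a0^(m+1), where h = a - a0 *)
Definition sinv (a : nat -> F) : nat -> F :=
  scomp (fun m => (-1) ^+ m / (a 0%N) ^+ m.+1)
        (fun n => if n is 0%N then 0 else a n).

Definition dfall (z lam : F) (n : nat) : F := \prod_(i < n) (z - i%:R * lam).
Definition ffall (z : F) (r : nat) : F := \prod_(i < r) (z - i%:R).

Definition dexp (lam z : F) : nat -> F := fun n => dfall z lam n / n`!%:R.
(* log_lam(1+t) = ((1+t)^lam - 1)/lam, with (1+t)^lam = sum_n (lam)_n t^n/n! *)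
Definition dlog (lam : F) : nat -> F :=
  fun n => if n is 0%N then 0 else ffall lam n / (lam * n`!%:R).
Definition dEi (k : int) (lam : F) : nat -> F :=
  fun n => if n is 0%N then 0
           else dfall 1 lam n / ((n%:R) ^ k * (n.-1)`!%:R).

Definition dStirling2 (lam x : F) (n r : nat) : F :=
  n`!%:R * smul (fun m => spow (ssub (dexp lam 1) sone) r m / r`!%:R)
                (dexp lam x) n.

(* common factor (1-u) Ei_{k,lam}(log_lam(1+t)) / (e_lam(t) - u) e_lam^x(t) *)
Definition FGcore (lam : F) (k : int) (u x : F) : nat -> F :=
  smul (smul (sscale (1 - u) (sinv (ssub (dexp lam 1) (sscale u sone))))
             (scomp (dEi k lam) (dlog lam)))
       (dexp lam x).
End FPS.

Section Trig.
Variable R : realType.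
Local Open Scope complex_scope.
Definition dcos (lam y : R[i]) : nat -> R[i] :=
  fun n => (dexp lam ('i * y) n + dexp lam (- ('i * y)) n) / 2.
Definition dsin (lam y : R[i]) : nat -> R[i] :=
  fun n => (dexp lam ('i * y) n - dexp lam (- ('i * y)) n) / (2 * 'i).

Definition FGc (lam : R[i]) (k : int) (u x y : R[i]) (n : nat) : R[i] :=
  n`!%:R * smul (FGcore lam k u x) (dcos lam y) n.
Definition FGs (lam : R[i]) (k : int) (u x y : R[i]) (n : nat) : R[i] :=
  n`!%:R * smul (FGcore lam k u x) (dsin lam y) n.
End Trig.

(* Main.v *)
From HB Require Import structures.
From mathcomp Require Import all_boot all_order all_algebra.
From mathcomp Require Import reals.
From mathcomp Require Import complex.
Require Import Defs.
From mathcomp Require Import ring.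
Set Implicit Arguments. Unset Strict Implicit. Unset Printing Implicit Defensive.
Import Order.TTheory GRing.Theory Num.Theory.
Local Open Scope ring_scope.
Section Gen.
Variable F : numFieldType.
Implicit Types (a b : nat -> F) (p q : {poly F}).

Definition agree n a p := forall m, (m <= n)%N -> a m = p`_m.

Lemma agree_mul n a b p q : agree n a p -> agree n b q -> agree n (smul a b) (p * q).
Proof.
move=> ha hb m mn; rewrite /smul coefM; apply: eq_bigr => i _.
have im : (i <= m)%N by rewrite -ltnS.
rewrite ha ?hb //; [exact: leq_trans (leq_subr _ _) mn | exact: leq_trans im mn].
Qed.

Definition tp n a : {poly F} := \poly_(i < n.+1) a i.

Lemma agree_tp n a : agree n a (tp n a).
Proof. by move=> m mn; rewrite coef_poly ltnS mn. Qed.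

Lemma agree_one n : agree n (sone F) 1.
Proof. by move=> m _; rewrite coef1. Qed.

Lemma agree_sub n a b p q : agree n a p -> agree n b q -> agree n (ssub a b) (p - q).
Proof. by move=> ha hb m mn; rewrite coefB /ssub ha ?hb. Qed.

Lemma agree_pow n a p r : agree n a p -> agree n (spow a r) (p ^+ r).
Proof.
move=> ha; elim: r => [|r IH]; first by rewrite expr0; apply: agree_one.
by rewrite exprS; apply: agree_mul.
Qed.

Lemma agree_le n n' a p : (n' <= n)%N -> agree n a p -> agree n' a p.
Proof. by move=> le h m mn; apply: h; exact: leq_trans mn le. Qed.

Lemma agree_coef n p : agree n (fun m => p`_m) p.
Proof. by []. Qed.

Lemma spow_small a r m : a 0%N = 0 -> (m < r)%N -> spow a r m = 0.
Proof.
move=> a0; elim: r m => [|r IH] m //= mr.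
rewrite /smul; apply: big1 => i _.
case: i => [[|i] hi] /=; first by rewrite a0 mul0r.
rewrite IH ?mulr0 //.
by rewrite ltnS in hi; rewrite ltn_subLR // addSn ltnS -ltnS (leq_trans mr) // ltnS leq_addl.
Qed.

Lemma sum_widen (G : nat -> F) n K :
  (forall i, (n <= i)%N -> G i = 0) -> (n <= K)%N ->
  \sum_(i < n) G i = \sum_(i < K) G i.
Proof.
move=> hG nK; rewrite -(subnKC nK) big_split_ord /= [X in _ + X]big1 ?addr0 //.
by move=> i _; apply: hG; rewrite leq_addr.
Qed.

Lemma dfallS (z lam : F) n : dfall z lam n.+1 = dfall z lam n * (z - n%:R * lam).
Proof. by rewrite /dfall big_ord_recr. Qed.

Lemma vander_raw (a b lam : F) n : dfall (a + b) lam n =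
  \sum_(k < n.+1) 'C(n, k)%:R * dfall a lam k * dfall b lam (n - k).
Proof.
elim: n => [|n IH]; first by rewrite big_ord1 /dfall !big_ord0 !mulr1.
rewrite dfallS IH mulr_suml.
have -> : \sum_(i < n.+1) 'C(n, i)%:R * dfall a lam i * dfall b lam (n - i) * (a + b - n%:R * lam)
  = \sum_(i < n.+1) 'C(n, i)%:R * dfall a lam i.+1 * dfall b lam (n - i)
  + \sum_(i < n.+1) 'C(n, i)%:R * dfall a lam i * dfall b lam (n - i).+1.
  rewrite -big_split /=; apply: eq_bigr => i _.
  have hi : (i <= n)%N by rewrite -ltnS.
  rewrite !dfallS natrB //; ring.
rewrite [RHS]big_ord_recl /= subn0.
under [X in _ = _ + X]eq_bigr => i _ do rewrite /bump /= add1n binS natrD subSS !mulrDl.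
rewrite big_split /= [RHS]addrA [RHS]addrC; congr (_ + _).
rewrite [in RHS]big_ord_recr /= (bin_small (ltnSn n)) !mul0r addr0.
rewrite [LHS]big_ord_recl /= subn0 !bin0; congr (_ + _).
by apply: eq_bigr => i _; rewrite /bump /= add1n subnSK.
Qed.

Lemma fact_neq0 n : (n`!%:R : F) != 0.
Proof. by rewrite pnatr_eq0 -lt0n fact_gt0. Qed.

Lemma vander (a b lam : F) n : dexp lam (a + b) n = smul (dexp lam a) (dexp lam b) n.
Proof.
rewrite /dexp /smul vander_raw mulr_suml; apply: eq_bigr => i _.
have hi : (i <= n)%N by rewrite -ltnS.
rewrite -(bin_fact hi) !natrM.
have h1 := fact_neq0 i; have h2 := fact_neq0 (n - i).
by field; rewrite h1 h2 /= pnatr_eq0 -lt0n bin_gt0.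
Qed.

Lemma dexp0 (lam : F) n : dexp lam 0 n = sone F n.
Proof.
rewrite /dexp /dfall /sone; case: n => [|n]; first by rewrite big_ord0 divr1.
by rewrite big_ord_recl /= mul0r subrr mul0r mul0r.
Qed.

Lemma ffall_nat (N r : nat) : ffall (N%:R : F) r = (N ^_ r)%:R.
Proof.
elim: r => [|r IH]; first by rewrite /ffall big_ord0 ffactn0.
rewrite /ffall big_ord_recr /= -/(ffall _ _) IH ffactnSr natrM.
case: (leqP r N) => hr; first by rewrite natrB.
by rewrite ffact_small // !mul0r.
Qed.

Lemma pow_dexp (lam : F) (N m : nat) :
  agree m (dexp lam N%:R) (tp m (dexp lam 1) ^+ N).
Proof.
elim: N => [|N IH].
  by rewrite expr0 => j hj; rewrite dexp0; apply: agree_one.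
rewrite exprS => j hj; rewrite -nat1r vander.
exact: (agree_mul (@agree_tp m (dexp lam 1)) IH hj).
Qed.

Definition hser (lam : F) := ssub (dexp lam 1) (sone F).

Lemma hser0 (lam : F) : hser lam 0%N = 0.
Proof. by rewrite /hser /ssub /dexp /dfall /sone big_ord0 divr1 subrr. Qed.

Lemma I3_nat (lam : F) (N m : nat) :
  \sum_(r < m.+1) ffall N%:R r / r`!%:R * spow (hser lam) r m = dexp lam N%:R m.
Proof.
rewrite (pow_dexp lam N (leqnn m)).
set P := tp m (dexp lam 1).
have hP : agree m (hser lam) (P - 1) by apply: agree_sub; [apply: agree_tp|apply: agree_one].
rewrite -[P](subrK 1) exprD1n coef_sum.
under [RHS]eq_bigr => r _ do rewrite coefMn -(agree_pow r hP (leqnn m)).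
have hf r : ffall N%:R r / r`!%:R * spow (hser lam) r m = spow (hser lam) r m *+ 'C(N, r).
  rewrite ffall_nat -bin_ffact natrM mulfK ?fact_neq0 //.
  by rewrite mulr_natl.
rewrite (eq_bigr _ (fun (r : 'I_m.+1) _ => hf r)).
rewrite (@sum_widen (fun r => spow (hser lam) r m *+ 'C(N, r)) m.+1 (m.+1 + N.+1) _ (leq_addr _ _));
  last by move=> i hi; rewrite spow_small ?hser0 ?mul0rn.
rewrite (@sum_widen (fun r => spow (hser lam) r m *+ 'C(N, r)) N.+1 (m.+1 + N.+1) _ (leq_addl _ _)) //.
by move=> i hi; rewrite bin_small ?mulr0n.
Qed.

Lemma I3 (lam x : F) (m : nat) :
  \sum_(r < m.+1) ffall x r / r`!%:R * spow (hser lam) r m = dexp lam x m.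
Proof.
pose P : {poly F} := (\prod_(i < m) ('X - (i%:R * lam)%:P)) * (m`!%:R^-1)%:P
  - \sum_(r < m.+1) (\prod_(i < r) ('X - i%:R%:P)) * (spow (hser lam) r m / r`!%:R)%:P.
have hev z : P.[z] = dexp lam z m - \sum_(r < m.+1) ffall z r / r`!%:R * spow (hser lam) r m.
  rewrite /P hornerD hornerN hornerM hornerC horner_prod horner_sum.
  congr (_ - _).
    by rewrite /dexp /dfall; congr (_ * _); apply: eq_bigr => i _; rewrite hornerXsubC.
  apply: eq_bigr => r _; rewrite hornerM hornerC horner_prod /ffall.
  under eq_bigr => i _ do rewrite hornerXsubC.
  by rewrite mulrA mulrAC.
suff P0 : P = 0 by apply/eqP; rewrite eq_sym -subr_eq0 -hev P0 horner0.
apply/eqP; apply/negPn/negP => Pn0.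
pose rs : seq F := [seq i%:R | i <- iota 0 (size P)].
have H1 : all (root P) rs.
  by apply/allP => z /mapP [i _ ->]; rewrite /root hev I3_nat subrr.
have H2 : uniq rs.
  rewrite map_inj_uniq ?iota_uniq // => i j /eqP; rewrite eqr_nat => /eqP //.
have := max_poly_roots Pn0 H1 H2.
by rewrite size_map size_iota ltnn.
Qed.



Lemma smul_sone (lam : F) a j : smul a (dexp lam 0) j = a j.
Proof.
have e : smul a (dexp lam 0) j = smul a (sone F) j.
  by rewrite /smul; apply: eq_bigr => i _; rewrite dexp0.
rewrite e (agree_mul (@agree_tp j a) (@agree_one j) (leqnn j)) mulr1.
by rewrite -(@agree_tp j a j (leqnn j)).
Qed.

Lemma smul_rot a e d n : smul (smul a e) d n = smul e (smul a d) n.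
Proof.
rewrite (agree_mul (agree_mul (@agree_tp n a) (@agree_tp n e)) (@agree_tp n d) (leqnn n)).
rewrite (agree_mul (@agree_tp n e) (agree_mul (@agree_tp n a) (@agree_tp n d)) (leqnn n)).
by rewrite mulrCA mulrA.
Qed.

Lemma e12 (lam x1 x2 : F) n m : (m <= n)%N ->
  dexp lam (x1 + x2) m = \sum_(r < n.+1) ffall x2 r / r`!%:R *
     smul (spow (hser lam) r) (dexp lam x1) m.
Proof.
move=> mn; rewrite addrC vander /smul.
rewrite (eq_bigr (fun i : 'I_m.+1 => \sum_(r < n.+1) ffall x2 r / r`!%:R * spow (hser lam) r i * dexp lam x1 (m - i))).
  rewrite exchange_big /=; apply: eq_bigr => r _; rewrite mulr_sumr; apply: eq_bigr => i _.
  by rewrite mulrA.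
move=> i _; rewrite -(I3 lam x2 i) mulr_suml.
have hi : (i.+1 <= n.+1)%N by rewrite ltnS (leq_trans _ mn) // -ltnS.
rewrite (@sum_widen (fun r => ffall x2 r / r`!%:R * spow (hser lam) r i * dexp lam x1 (m - i)) i.+1 n.+1 _ hi) //.
by move=> r hr; rewrite spow_small ?hser0 // mulr0 mul0r.
Qed.


Lemma smulE a b n : smul a b n = \sum_(i < n.+1) a i * b (n - i)%N.
Proof. by []. Qed.

Lemma S2_eq (lam x : F) m r : dStirling2 lam x m r =
  m`!%:R * (smul (spow (hser lam) r) (dexp lam x) m / r`!%:R).
Proof.
rewrite /dStirling2 /smul mulr_suml; congr (_ * _); apply: eq_bigr => i _.
by rewrite mulrAC.
Qed.

Lemma S2_small (lam x : F) m r : (m < r)%N -> dStirling2 lam x m r = 0.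
Proof.
move=> mr; rewrite S2_eq /smul big1 ?mul0r ?mulr0 // => i _.
rewrite spow_small ?hser0 ?mul0r //.
by apply: leq_ltn_trans mr; rewrite -ltnS.
Qed.

Lemma smul_sone_l (lam : F) a d k : smul (smul a (dexp lam 0)) d k = smul a d k.
Proof. by apply: eq_bigr => i _; rewrite smul_sone. Qed.

Lemma key (lam x1 x2 : F) (A D : nat -> F) n :
  n`!%:R * smul (smul A (dexp lam (x1 + x2))) D n =
  \sum_(m < n.+1) 'C(n, m)%:R * \sum_(r < m.+1) dStirling2 lam x1 m r * ffall x2 r *
     ((n - m)`!%:R * smul (smul A (dexp lam 0)) D (n - m)).
Proof.
rewrite smul_rot [X in _ * X = _]smulE mulr_sumr; apply: eq_bigr => m _.
have hm : (m <= n)%N by rewrite -ltnS.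
rewrite smul_sone_l (e12 _ _ _ hm).
rewrite (@sum_widen (fun r => dStirling2 lam x1 m r * ffall x2 r *
     ((n - m)`!%:R * smul A D (n - m))) m.+1 n.+1 _ hm); last first.
  by move=> r hr; rewrite S2_small ?mul0r.
rewrite [RHS]mulr_sumr mulr_suml mulr_sumr; apply: eq_bigr => r _.
rewrite S2_eq -(bin_fact hm) !natrM.
field; exact: fact_neq0.
Qed.

End Gen.

Local Open Scope complex_scope.

Theorem theorem6 (R : realType) (lam : R) (k : int) (u : R[i]) (x1 x2 y : R) :
  lam != 0 -> u != 1 ->
  forall n : nat,
    FGc lam%:C k u (x1 + x2)%:C y%:C n =
      \sum_(m < n.+1) 'C(n, m)%:R *
        \sum_(r < m.+1) dStirling2 lam%:C x1%:C m r * ffall x2%:C r *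
          FGc lam%:C k u 0 y%:C (n - m)
    /\
    FGs lam%:C k u (x1 + x2)%:C y%:C n =
      \sum_(m < n.+1) 'C(n, m)%:R *
        \sum_(r < m.+1) dStirling2 lam%:C x1%:C m r * ffall x2%:C r *
          FGs lam%:C k u 0 y%:C (n - m).
Proof.
move=> _ _ n.
have -> : (x1 + x2)%:C = x1%:C + x2%:C :> R[i] by exact: rmorphD.
rewrite /FGc /FGs /FGcore.
set A := (smul (sscale _ _) (scomp _ _)).
split; [exact: (@key _ lam%:C x1%:C x2%:C A (dcos lam%:C y%:C) n)
   | exact: (@key _ lam%:C x1%:C x2%:C A (dsin lam%:C y%:C) n)].
Qed.
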